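(* Let $n\geq 3$ and let $C_n^*$ be the bigraded complex described in the context. Then \[\operatorname{gr}_{\mathcal{V}}\alpha_s^*\leq \operatorname{gr}_{\mathcal{V}}\alpha_n^*-2n\ \text{ for } 1\leq s\leq n-1,\qquad \operatorname{gr}_{\mathcal{V}}\widetilde{\alpha}_s^*\leq \operatorname{gr}_{\mathcal{V}}\alpha_n^*-2n\ \text{ for } 1\leq s\leq n-2,\] and \[\operatorname{gr}_{\mathcal{U}}\alpha_s^*\leq \operatorname{gr}_{\mathcal{U}}\alpha_n^*-2n\ \text{ for } n+1\leq s\leq 2n-1,\qquad \operatorname{gr}_{\mathcal{U}}\widetilde{\alpha}_s^*\leq \operatorname{gr}_{\mathcal{U}}\alpha_n^*-2n\ \text{ for } n+1\leq s\leq 2n-2.\]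
   Context: Let $\mathbb{F}=\mathbb{Z}/2$ and $R=\mathbb{F}[\mathcal{U},\mathcal{V}]$, bigraded by $(\operatorname{gr}_{\mathcal{U}},\operatorname{gr}_{\mathcal{V}})$ with $\mathcal{U}$ of bigrading $(-2,0)$ and $\mathcal{V}$ of bigrading $(0,-2)$. For $n\geq 3$, $C_n^*$ is the free $R$-module with basis $\alpha^*_s$ ($1\leq s\leq 2n-1$); $\widetilde{\alpha}^*_s$ ($1\leq s\leq n-2$ and $n+1\leq s\leq 2n-2$); $b^{*,(s)}_{n-1}$ ($1\leq s\leq n-2$); $b^{*,(s)}_{n}$ ($1\leq s\leq 2n-2$); $b^{*,(s)}_{n+1}$ ($n+1\leq s\leq 2n-2$), with $R$-linear differential $\partial$ given by $\partial\alpha^*_s=0$, $\partial\widetilde{\alpha}^*_s=0$, and $\partial b^{*,(s)}_{n-1}=\mathcal{U}^{n(n-1)/2}\mathcal{V}^{n(n-1)/2}\alpha^*_s+\mathcal{V}^{n-s-1}\widetilde{\alpha}^*_s$ for $1\leq s\leq n-2$; $\partial b^{*,(s)}_{n}=\mathcal{U}^{n(n+1)/2-s}\mathcal{V}^{n(n+1)/2}\alpha^*_{s+1}+\mathcal{U}^{n}\widetilde{\alpha}^*_s$ for $1\leq s\leq n-2$; $\partial b^{*,(s)}_{n}=\mathcal{U}^{n(n+1)/2}\mathcal{V}^{n(n-1)/2-n+s+1}\alpha^*_s+\mathcal{U}^{n(n+1)/2-s}\mathcal{V}^{n(n+1)/2}\alpha^*_{s+1}$ for $n-1\leq s\leq n$;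 $\partial b^{*,(s)}_{n}=\mathcal{U}^{n(n+1)/2}\mathcal{V}^{n(n-1)/2-n+s+1}\alpha^*_s+\mathcal{V}^{n}\widetilde{\alpha}^*_s$ for $n+1\leq s\leq 2n-2$; $\partial b^{*,(s)}_{n+1}=\mathcal{U}^{n(n-1)/2}\mathcal{V}^{n(n-1)/2}\alpha^*_{s+1}+\mathcal{U}^{s-n}\widetilde{\alpha}^*_s$ for $n+1\leq s\leq 2n-2$. The basis elements are assigned bigradings $(\operatorname{gr}_{\mathcal{U}},\operatorname{gr}_{\mathcal{V}})$ so that $\partial$ is homogeneous of bigrading $(-1,-1)$; such a bigrading is unique up to an overall shift, and any such choice is fixed. *)

(* Defs.v *)
From Stdlib Require Import ZArith List Lia.
Open Scope Z_scope.

Inductive gen : Type :=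
| alpha (s : nat)
| talpha (s : nat)
| b_nm1 (s : nat)
| b_n (s : nat)
| b_np1 (s : nat).

Definition valid_gen (n : nat) (g : gen) : Prop :=
  match g with
  | alpha s => (1 <= s <= 2*n-1)%nat
  | talpha s => (1 <= s <= n-2)%nat \/ (n+1 <= s <= 2*n-2)%nat
  | b_nm1 s => (1 <= s <= n-2)%nat
  | b_n s => (1 <= s <= 2*n-2)%nat
  | b_np1 s => (n+1 <= s <= 2*n-2)%nat
  end.

(* The differential: d g = sum over (i, j, h) of U^i V^j h. *)
Definition dterms (n : nat) (g : gen) : list (nat * nat * gen) :=
  let T := (n * (n - 1) / 2)%nat in
  let S := (n * (n + 1) / 2)%nat in
  match g with
  | alpha _ => nil
  | talpha _ => nil
  | b_nm1 s => (T, T, alpha s) :: (0%nat, (n - s - 1)%nat, talpha s) :: nil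
  | b_n s =>
      if (s <=? n - 2)%nat then
        ((S - s)%nat, S, alpha (s+1)) :: (n, 0%nat, talpha s) :: nil
      else if (s <=? n)%nat then
        (S, (T - n + s + 1)%nat, alpha s) :: ((S - s)%nat, S, alpha (s+1)) :: nil
      else
        (S, (T - n + s + 1)%nat, alpha s) :: (0%nat, n, talpha s) :: nil
  | b_np1 s => (T, T, alpha (s+1)) :: ((s - n)%nat, 0%nat, talpha s) :: nil
  end.

(* (grU, grV) is a bigrading of C_n^* (U of bigrading (-2,0), V of (0,-2))
   for which d is homogeneous of bigrading (-1,-1). *)
Definition is_bigrading (n : nat) (grU grV : gen -> Z) : Prop :=
  forall g, valid_gen n g ->
  forall i j h, In (i, j, h) (dterms n g) ->
    grU h - 2 * Z.of_nat i = grU g - 1 /\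
    grV h - 2 * Z.of_nat j = grV g - 1.

(* Main.v *)
Require Import Defs.
From Stdlib Require Import ZArith List Lia.
Open Scope Z_scope.

Lemma TS_facts (n : nat) : (3 <= n)%nat ->
  (n * (n + 1) / 2 = n * (n - 1) / 2 + n)%nat /\ (n <= n * (n - 1) / 2)%nat.
Proof.
  intros Hn. split.
  - replace (n * (n + 1))%nat with (n * (n - 1) + n * 2)%nat by nia.
    rewrite Nat.div_add; lia.
  - pose proof (Nat.div_mod (n * (n - 1)) 2 ltac:(lia)).
    pose proof (Nat.mod_upper_bound (n * (n - 1)) 2 ltac:(lia)).
    nia.
Qed.

Ltac inb := unfold dterms; simpl; auto.

Section S.
Variables (n : nat) (grU grV : gen -> Z).
Hypothesis Hn : (3 <= n)%nat.
Hypothesis H : is_bigrading n grU grV.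

Lemma In_bn_low s : (s <= n - 2)%nat ->
  In ((n * (n + 1) / 2 - s)%nat, (n * (n + 1) / 2)%nat, alpha (s+1)) (dterms n (b_n s)) /\
  In (n, 0%nat, talpha s) (dterms n (b_n s)).
Proof.
  intros Hs. unfold dterms. rewrite (proj2 (Nat.leb_le s (n-2)) Hs). simpl; auto.
Qed.

Lemma In_bn_mid s : (n - 2 < s <= n)%nat ->
  In ((n * (n + 1) / 2)%nat, (n * (n - 1) / 2 - n + s + 1)%nat, alpha s) (dterms n (b_n s)) /\
  In ((n * (n + 1) / 2 - s)%nat, (n * (n + 1) / 2)%nat, alpha (s+1)) (dterms n (b_n s)).
Proof.
  intros Hs. unfold dterms. rewrite (proj2 (Nat.leb_gt s (n-2)) ltac:(lia)).
  rewrite (proj2 (Nat.leb_le s n) ltac:(lia)). simpl; auto.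
Qed.

Lemma In_bn_high s : (n < s)%nat ->
  In ((n * (n + 1) / 2)%nat, (n * (n - 1) / 2 - n + s + 1)%nat, alpha s) (dterms n (b_n s)) /\
  In (0%nat, n, talpha s) (dterms n (b_n s)).
Proof.
  intros Hs. unfold dterms. rewrite (proj2 (Nat.leb_gt s (n-2)) ltac:(lia)).
  rewrite (proj2 (Nat.leb_gt s n) ltac:(lia)). simpl; auto.
Qed.

Lemma Vstep s : (1 <= s <= n - 2)%nat ->
  grV (alpha s) <= grV (alpha (s+1)) /\ grV (talpha s) <= grV (alpha (s+1)) - 2 * Z.of_nat n.
Proof.
  intros Hs. destruct (TS_facts n Hn) as [HS HT].
  destruct (In_bn_low s ltac:(lia)) as [I1 I2].
  pose proof (H (b_n s) ltac:(simpl; lia) _ _ _ I1) as [_ E1].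
  pose proof (H (b_n s) ltac:(simpl; lia) _ _ _ I2) as [_ E2].
  pose proof (H (b_nm1 s) ltac:(simpl; lia) _ _ _ (or_introl eq_refl)) as [_ E3].
  pose proof (H (b_nm1 s) ltac:(simpl; lia) _ _ _ (or_intror (or_introl eq_refl))) as [_ E4].
  rewrite HS in *. generalize dependent (n * (n - 1) / 2)%nat. intros. lia.
Qed.

Lemma Vtop : grV (alpha (n-1)) = grV (alpha n) - 2 * Z.of_nat n.
Proof.
  destruct (TS_facts n Hn) as [HS HT].
  destruct (In_bn_mid (n-1) ltac:(lia)) as [I1 I2].
  pose proof (H (b_n (n-1)) ltac:(simpl; lia) _ _ _ I1) as [_ E1].
  pose proof (H (b_n (n-1)) ltac:(simpl; lia) _ _ _ I2) as [_ E2].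
  replace (n - 1 + 1)%nat with n in E2 by lia.
  rewrite HS in *. generalize dependent (n * (n - 1) / 2)%nat. intros. lia.
Qed.

Lemma Ustep s : (n + 1 <= s <= 2 * n - 2)%nat ->
  grU (alpha (s+1)) <= grU (alpha s) /\ grU (talpha s) <= grU (alpha s).
Proof.
  intros Hs. destruct (TS_facts n Hn) as [HS HT].
  destruct (In_bn_high s ltac:(lia)) as [I1 I2].
  pose proof (H (b_n s) ltac:(simpl; lia) _ _ _ I1) as [E1 _].
  pose proof (H (b_n s) ltac:(simpl; lia) _ _ _ I2) as [E2 _].
  pose proof (H (b_np1 s) ltac:(simpl; lia) _ _ _ (or_introl eq_refl)) as [E3 _].
  pose proof (H (b_np1 s) ltac:(simpl; lia) _ _ _ (or_intror (or_introl eq_refl))) as [E4 _].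
  rewrite HS in *. generalize dependent (n * (n - 1) / 2)%nat. intros. lia.
Qed.

Lemma Utop : grU (alpha (n+1)) = grU (alpha n) - 2 * Z.of_nat n.
Proof.
  destruct (TS_facts n Hn) as [HS HT].
  destruct (In_bn_mid n ltac:(lia)) as [I1 I2].
  pose proof (H (b_n n) ltac:(simpl; lia) _ _ _ I1) as [E1 _].
  pose proof (H (b_n n) ltac:(simpl; lia) _ _ _ I2) as [E2 _].
  rewrite HS in *. generalize dependent (n * (n - 1) / 2)%nat. intros. lia.
Qed.

Lemma Vmono : forall k s, (1 <= s)%nat -> (s + k = n - 1)%nat ->
  grV (alpha s) <= grV (alpha (n-1)).
Proof.
  induction k; intros s Hs Hk.
  - replace s with (n-1)%nat by lia. lia.
  - pose proof (Vstep s ltac:(lia)) as [A _].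
    pose proof (IHk (s+1)%nat ltac:(lia) ltac:(lia)). lia.
Qed.

Lemma Umono : forall k s, (n + 1 + k = s)%nat -> (s <= 2 * n - 1)%nat ->
  grU (alpha s) <= grU (alpha (n+1)).
Proof.
  induction k; intros s Hk Hs.
  - subst s. replace (n+1+0)%nat with (n+1)%nat by lia. lia.
  - pose proof (Ustep (s-1) ltac:(lia)) as [A _].
    replace (s - 1 + 1)%nat with s in A by lia.
    pose proof (IHk (s-1)%nat ltac:(lia) ltac:(lia)). lia.
Qed.

End S.

Theorem lemma2p8 (n : nat) (grU grV : gen -> Z) :
  (3 <= n)%nat ->
  is_bigrading n grU grV ->
  (forall s, (1 <= s <= n - 1)%nat -> grV (alpha s) <= grV (alpha n) - 2 * Z.of_nat n) /\
  (forall s, (1 <= s <= n - 2)%nat -> grV (talpha s) <= grV (alpha n) - 2 * Z.of_nat n) /\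
  (forall s, (n + 1 <= s <= 2 * n - 1)%nat -> grU (alpha s) <= grU (alpha n) - 2 * Z.of_nat n) /\
  (forall s, (n + 1 <= s <= 2 * n - 2)%nat -> grU (talpha s) <= grU (alpha n) - 2 * Z.of_nat n).
Proof.
  intros Hn H.
  pose proof (Vtop n grU grV Hn H). pose proof (Utop n grU grV Hn H).
  split; [|split; [|split]]; intros s Hs.
  - pose proof (Vmono n grU grV Hn H (n - 1 - s) s ltac:(lia) ltac:(lia)). lia.
  - pose proof (Vstep n grU grV Hn H s Hs) as [_ A].
    pose proof (Vmono n grU grV Hn H (n - 1 - (s+1)) (s+1) ltac:(lia) ltac:(lia)). lia.
  - pose proof (Umono n grU grV Hn H (s - (n+1)) s ltac:(lia) ltac:(lia)). lia.
  - pose proof (Ustep n grU grV Hn H s Hs) as [_ A].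
    pose proof (Umono n grU grV Hn H (s - (n+1)) s ltac:(lia) ltac:(lia)). lia.
Qed.
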